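(* Let $X$ be a countable set with at least two elements, equipped with the discrete metric $\rho$, and denote this metric space by $\mathcal{X}$. Let $p\in(0,\infty)$ and let $f:\mathcal{W}_p(\mathcal{X})\to\mathcal{W}_p(\mathcal{X})$ be a surjective isometry (a bijection preserving $W_p$). Then there exists a bijection $\sigma:\mathcal{X}\to\mathcal{X}$ such that $$f(\mu)(\{x\})=\mu(\{\sigma^{-1}(x)\})\qquad\text{for all }x\in\mathcal{X}\text{ and all }\mu\in\mathcal{P}(\mathcal{X}).$$ Conversely, for any bijection $\sigma:\mathcal{X}\to\mathcal{X}$, the map defined by this formula is an isometry of $\mathcal{W}_p(\mathcal{X})$.
   Context: $\rho(x,y)=1$ if $x\ne y$ and $\rho(x,x)=0$. $\mathcal{P}(\mathcal{X})$ is the set of probability measures on the power set of $\mathcal{X}$. A coupling of $\mu,\nu\in\mathcal{P}(\mathcal{X})$ is a probability measure $\pi$ on $\mathcal{X}^2$ with marginals $\mu$ and $\nu$; $\mathcal{C}(\mu,\nu)$ is the set of couplings. $W_p(\mu,\nu)=\big(\inf_{\pi\in\mathcal{C}(\mu,\nu)}\int\rho^p\,d\pi\big)^{1/p}$ for $p\ge1$ and $W_p(\mu,\nu)=\inf_{\pi\in\mathcal{C}(\mu,\nu)}\int\rho^p\,d\pi$ for $0<p<1$. $\mathcal{W}_p(\mathcal{X})$ is the metric space $(\mathcal{P}(\mathcal{X}),W_p)$. *)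

(* Defs.v *)
From HB Require Import structures.
From mathcomp Require Import all_boot all_order all_algebra.
From mathcomp Require Import all_classical all_reals all_analysis.
Set Implicit Arguments. Unset Strict Implicit. Unset Printing Implicit Defensive.
Import Order.TTheory GRing.Theory Num.Theory numFieldNormedType.Exports.
Local Open Scope classical_set_scope.
Local Open Scope ring_scope.

Section Wass.
Variable R : realType.

Definition is_prob (T : Type) (mu : set T -> R) : Prop :=
  [/\ forall A, 0 <= mu A,
      mu setT = 1 &
      forall F : nat -> set T,
        (forall i j, i <> j -> F i `&` F j = set0) ->
        (fun n => \sum_(0 <= i < n) mu (F i)) @ \oo --> mu (\bigcup_n F n)].

Record prob (T : Type) := Prob { pmeas :> set T -> R; pmeasP : is_prob pmeas }.

Variable X : countType.

Definition rho (x y : X) : R := if x == y then 0 else 1.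

Definition coupling (mu nu : prob X) (pi : prob (X * X)) : Prop :=
  (forall A, pi (A `*` setT) = mu A) /\ (forall B, pi (setT `*` B) = nu B).

(* \int rho^p dpi ; rho^p is the simple function taking value 0^p on the
   diagonal and 1^p off the diagonal, so its integral is written out. *)
Definition cost (p : R) (pi : prob (X * X)) : R :=
  (0 `^ p) * pi [set z | rho z.1 z.2 = 0] + (1 `^ p) * pi [set z | rho z.1 z.2 = 1].

Definition Wp (p : R) (mu nu : prob X) : R :=
  let c := inf [set cost p pi | pi in [set pi | coupling mu nu pi]] in
  if 1 <= p then c `^ (p^-1) else c.

Definition Wp_isometry (p : R) (f : prob X -> prob X) : Prop :=
  forall mu nu, Wp p (f mu) (f nu) = Wp p mu nu.

End Wass.

(* Main.v *)
Require Import Defs.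
From HB Require Import structures.
From mathcomp Require Import all_boot all_order all_algebra.
From mathcomp Require Import all_classical all_reals all_analysis.
Import Order.TTheory GRing.Theory Num.Theory numFieldNormedType.Exports.
Local Open Scope classical_set_scope.
Local Open Scope ring_scope.
Set Warnings "-notation-overridden,-ambiguous-paths,-notation-incompatible-prefix".
Set Implicit Arguments. Unset Strict Implicit. Unset Printing Implicit Defensive.

Section Gen.
Variable R : realType.

Lemma esumZ (T : choiceType) (S : set T) (a : T -> \bar R) (r : R) :
  0 <= r -> (forall i, (0 <= a i)%E) ->
  \esum_(i in S) (r%:E * a i)%E = (r%:E * \esum_(i in S) a i)%E.
Proof.
move=> r0 a0; rewrite /esum -ereal_supZl//; last first.
  by apply/set0P; exists 0%E; exists set0; [exact: fsets_set0| rewrite fsbig_set0].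
congr ereal_sup; apply/seteqP; split=> x /=.
- move=> [A fA <-]; exists (\sum_(i \in A) a i)%E; first by exists A.
  by rewrite ge0_mule_fsumr.
- by move=> [y [A fA <-] <-]; exists A => //; rewrite ge0_mule_fsumr.
Qed.

Variable T : Type.
Implicit Types P : prob R T.

Lemma prob_ge0 P A : 0 <= P A. Proof. by case: (pmeasP P). Qed.
Lemma probT P : P setT = 1. Proof. by case: (pmeasP P). Qed.
Lemma prob_cvg P (F : nat -> set T) :
  (forall i j, i <> j -> F i `&` F j = set0) ->
  (fun n => \sum_(0 <= i < n) P (F i)) @ \oo --> P (\bigcup_n F n).
Proof. by case: (pmeasP P) => _ _ h; exact: h. Qed.

Lemma prob0 P : P set0 = 0.
Proof.
have h := @prob_cvg P (fun _ => set0) (fun _ _ _ => setI0 _).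
have h2 : cvgn (series (fun _ : nat => P set0)) by apply/cvg_ex; eexists; exact: h.
have := cvg_series_cvg_0 h2.
move/cvg_lim => <- //; by rewrite lim_cst.
Qed.

Lemma probU P A B : A `&` B = set0 -> P (A `|` B) = P A + P B.
Proof.
move=> AB.
pose F (i : nat) : set T := if i == 0%N then A else if i == 1%N then B else set0.
have dF : forall i j, i <> j -> F i `&` F j = set0.
  move=> [|[|i]] [|[|j]] //= _; rewrite /F /= ?setI0 ?set0I //.
  by rewrite setIC.
have h := @prob_cvg P F dF.
have UF : \bigcup_n F n = A `|` B.
  apply/seteqP; split=> x /=.
  - by case=> [[|[|i]]] _ /=; rewrite /F /=; auto.
  - by case=> h'; [exists 0%N | exists 1%N].
rewrite UF in h.
rewrite -(cvg_shiftn 2) in h.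
have e : [sequence \sum_(0 <= i < (n + 2)%N) P (F i)]_n = fun _ => P A + P B.
  apply/funext => n /=.
  rewrite addn2 big_nat_recl // big_nat_recl // big1 ?addr0 //.
  by move=> i _; rewrite /F /= prob0.
rewrite e in h.
by move/cvg_lim: h => <- //; rewrite lim_cst.
Qed.

Lemma probC P A : P (~` A) = 1 - P A.
Proof.
have := @probU P A (~` A) (setICr A); rewrite setUCr probT => ->.
by rewrite addrC addKr.
Qed.

Lemma prob_le P A B : A `<=` B -> P A <= P B.
Proof.
move=> AB; have -> : B = A `|` (B `&` ~` A).
  apply/seteqP; split=> x /=; last by case=> [/AB|[]].
  by move=> Bx; have [Ax|nAx] := pselect (A x); [left|right].
rewrite probU ?lerDl ?prob_ge0 //.
by rewrite setIA (setIC A) -setIA setICr setI0.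
Qed.

Lemma prob_le1 P A : P A <= 1.
Proof. by rewrite -(probT P); apply: prob_le. Qed.

Lemma prob_null P N S : P N = 0 -> P S = P (S `&` ~` N).
Proof.
move=> PN.
have -> : S = (S `&` N) `|` (S `&` ~` N) by rewrite -setIUr setUCr setIT.
rewrite probU; last first.
  by rewrite setIACA setICr !setI0.
have -> : P (S `&` N) = 0.
  apply/eqP; rewrite eq_le prob_ge0 andbT -PN; apply: prob_le; exact: subIsetr.
rewrite add0r; congr (P _); apply/seteqP; split=> x /=; tauto.
Qed.

Lemma prob_ext (P Q : prob R T) : (forall A, P A = Q A) -> P = Q.
Proof.
case: P => mP hP; case: Q => mQ hQ /= h.
have e : mP = mQ by apply/funext.
subst; congr Prob; exact: Prop_irrelevance.
Qed.

End Gen.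

Section Count.
Variable R : realType.
Variable T : countType.
Implicit Types P : prob R T.

Lemma prob_esum P A : (P A)%:E = \esum_(t in A) (P [set t])%:E.
Proof.
pose F (n : nat) : set T := A `&` [set t | pickle t = n].
have tF : trivIset setT F.
  by move=> i j _ _ [t [[_ hi] [_ hj]]]; rewrite -hi -hj.
have UF : A = \bigcup_n F n.
  apply/seteqP; split=> x /=; first by move=> Ax; exists (pickle x).
  by case=> n _ [].
have dF : forall i j, i <> j -> F i `&` F j = set0.
  move=> i j ij; apply/seteqP; split=> x //= [[_ hi] [_ hj]]; apply: ij.
  by rewrite -hi -hj.
have h := @prob_cvg R T P F dF.
rewrite -UF in h.
rewrite {2}UF nneseries_sum_bigcup //; last by move=> t; rewrite lee_fin prob_ge0.
have eF : forall i, \esum_(j in F i) (P [set j])%:E = (P (F i))%:E.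
  move=> i; have [[t Ft]|nF] := pselect (exists t, F i t).
    have -> : F i = [set t].
      apply/seteqP; split=> s /=; last by move=> ->.
      move=> Fs; case: Ft => _ /= ht; case: Fs => _ /= hs.
      by apply: (pcan_inj (@pickleK T)); rewrite hs ht.
    by rewrite esum_set1 // lee_fin prob_ge0.
  have -> : F i = set0.
    by apply/seteqP; split=> s //= Fs; apply: nF; exists s.
  by rewrite esum_set0 prob0.
under eq_fun do under eq_bigr do rewrite eF.
under eq_fun do rewrite sumEFin.
rewrite -(cvg_lim _ h) //.
have hc : cvgn (fun n => \sum_(0 <= i < n) P (F i)) by apply/cvg_ex; eexists; exact: h.
by rewrite -EFin_lim.
Qed.

Lemma prob_pt_ext (P Q : prob R T) : (forall t, P [set t] = Q [set t]) -> P = Q.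
Proof.
move=> h; apply: prob_ext => A; apply/EFin_inj.
by rewrite !prob_esum; apply: eq_esum => t _; rewrite h.
Qed.

Lemma prob_pos P : exists x, 0 < P [set x].
Proof.
apply/not_existsP => hn.
have : (P setT)%:E = 0%E.
  rewrite prob_esum esum1 // => t _.
  have := hn t; rewrite lt_neqAle prob_ge0 andbT => /negP.
  by rewrite negbK => /eqP <-.
by rewrite probT; case=> /eqP; rewrite oner_eq0.
Qed.

Lemma prob_mass1 P x : P [set x] = 1 -> forall A, P A = if `[< A x >] then 1 else 0.
Proof.
move=> h1 A; case: ifPn => [/asboolP Ax|/asboolPn nAx].
  apply/eqP; rewrite eq_le prob_le1 /= -h1; apply: prob_le => y /= ->; exact: Ax.
apply/eqP; rewrite eq_le prob_ge0 andbT.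
have : P (~` [set x]) = 0 by rewrite probC h1 subrr.
move=> <-; apply: prob_le => y Ay /= yx; apply: nAx; rewrite -yx; exact: Ay.
Qed.

Lemma prob_only P x : (forall y, y != x -> P [set y] = 0) -> P [set x] = 1.
Proof.
move=> h.
have : (P (~` [set x]))%:E = 0%E.
  rewrite prob_esum esum1 // => t /= tx; rewrite h //; exact/eqP.
by case; rewrite probC => /eqP; rewrite subr_eq0 eq_sym => /eqP.
Qed.

Definition wmeas (w : T -> R) (A : set T) : R := fine (\esum_(t in A) (w t)%:E).

Lemma esum_sub (w : T -> R) A B : (forall t, 0 <= w t) -> A `<=` B ->
  (\esum_(t in A) (w t)%:E <= \esum_(t in B) (w t)%:E)%E.
Proof.
move=> w0 AB; rewrite esum_mkcond [X in (_ <= X)%E]esum_mkcond.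
apply: le_esum => t _; case: ifPn => tA.
  have tB : t \in B by move: tA; rewrite !inE; apply: AB.
  by rewrite tB.
by case: ifPn => _; rewrite ?lee_fin.
Qed.

Lemma wmeas_prob (w : T -> R) : (forall t, 0 <= w t) ->
  \esum_(t in setT) (w t)%:E = 1%E -> is_prob (wmeas w).
Proof.
move=> w0 w1; have e0 : forall A, (0 <= \esum_(t in A) (w t)%:E)%E.
  by move=> A; apply: esum_ge0 => t _; rewrite lee_fin.
have e1 : forall A, (\esum_(t in A) (w t)%:E <= 1)%E.
  by move=> A; rewrite -w1; apply: esum_sub.
have ef : forall A, \esum_(t in A) (w t)%:E \is a fin_num.
  move=> A; rewrite ge0_fin_numE //; apply: (le_lt_trans (e1 A)); exact: ltry.
split.
- by move=> A; apply: fine_ge0.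
- by rewrite /wmeas w1.
- move=> F dF.
  have tF : trivIset setT F.
    move=> i j _ _ [t [Fi Fj]]; case: (pselect (i = j)) => // ij.
    by have := dF i j ij; move/seteqP => [/(_ t (conj Fi Fj))].
  rewrite /wmeas nneseries_sum_bigcup //.
  set e := fun i => \esum_(j in F i) (w j)%:E.
  have hc := @is_cvg_nneseries R e xpredT 0%N (fun n _ _ => e0 (F n)).
  have sf : (\sum_(0 <= i <oo) e i)%E \is a fin_num.
    by rewrite -nneseries_sum_bigcup.
  move: hc; set L := (\sum_(0 <= i <oo) e i)%E.
  have -> : L = (fine L)%:E by rewrite fineK.
  move/fine_cvgP => [_]; apply: cvg_trans; apply: near_eq_cvg; near=> n => /=.
  rewrite /e; under eq_bigr do rewrite -(fineK (ef _)).
  by rewrite sumEFin.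
Unshelve. all: by end_near.
Qed.


End Count.

Section Push.
Variable R : realType.
Lemma push_prob (T U : Type) (P : prob R T) (h : T -> U) : is_prob (fun B => P (h @^-1` B)).
Proof.
split.
- by move=> A; apply: prob_ge0.
- by rewrite preimage_setT probT.
- move=> F dF; rewrite preimage_bigcup; apply: prob_cvg => i j ij.
  by rewrite -preimage_setI dF // preimage_set0.
Qed.
End Push.

Section W.
Variable R : realType.
Variable X : countType.
Implicit Types (mu nu m n : prob R X) (pi : prob R (X * X)).

Definition dirac_w (x : X) (t : X) : R := (t == x)%:R.
Lemma dirac_w_ge0 x t : 0 <= dirac_w x t. Proof. exact: ler0n. Qed.
Lemma dirac_w1 x : \esum_(t in setT) (dirac_w x t)%:E = 1%E.
Proof.
rewrite (esumID [set x]); last by move=> t _; rewrite lee_fin dirac_w_ge0.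
rewrite setTI esum_set1 ?lee_fin ?dirac_w_ge0 // esum1 ?adde0 /dirac_w ?eqxx //.
by move=> t [_ /= /eqP /negbTE ->].
Qed.

Definition dirac (x : X) : prob R X := Prob (wmeas_prob (dirac_w_ge0 x) (dirac_w1 x)).

Lemma dirac1 x : dirac x [set x] = 1.
Proof. by rewrite /= /wmeas esum_set1 ?lee_fin ?dirac_w_ge0 // /dirac_w eqxx. Qed.

Lemma diracE x A : dirac x A = if `[< A x >] then 1 else 0.
Proof. exact: prob_mass1 (dirac1 x) A. Qed.

Lemma dirac_inj x y : dirac x = dirac y -> x = y.
Proof.
move=> e; have := dirac1 x; rewrite e diracE.
case: ifPn => [/asboolP //|_ /eqP]; by rewrite eq_sym oner_eq0.
Qed.

Definition prodw (mu nu : prob R X) (z : X * X) : R := mu [set z.1] * nu [set z.2].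
Lemma prodw_ge0 mu nu z : 0 <= prodw mu nu z.
Proof. by rewrite /prodw mulr_ge0 ?prob_ge0. Qed.

Lemma prodw_rect mu nu A B :
  \esum_(z in A `*` B) (prodw mu nu z)%:E = (mu A * nu B)%:E.
Proof.
have -> : \esum_(z in A `*` B) (prodw mu nu z)%:E =
   \esum_(k in A `*`` (fun _ => B)) (mu [set k.1] * nu [set k.2])%:E by [].
rewrite -(esum_esum (a := fun i j => (mu [set i] * nu [set j])%:E)); last first.
  by move=> i j _ _; rewrite lee_fin mulr_ge0 ?prob_ge0.
have inner : forall i, \esum_(j in B) (mu [set i] * nu [set j])%:E = ((mu [set i])%:E * (nu B)%:E)%E.
  move=> i; rewrite (prob_esum nu B) -esumZ ?prob_ge0 //; last by move=> j; rewrite lee_fin prob_ge0.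
rewrite (eq_esum (fun i _ => inner i)) EFinM muleC (prob_esum mu A) -esumZ ?prob_ge0 //; last by move=> j; rewrite lee_fin prob_ge0.
by apply: eq_esum => i _; rewrite muleC.
Qed.

Lemma prodw1 mu nu : \esum_(z in setT) (prodw mu nu z)%:E = 1%E.
Proof.
have -> : [set: X * X] = setT `*` setT by apply/seteqP; split.
by rewrite prodw_rect !probT mulr1.
Qed.

Definition prodP (mu nu : prob R X) : prob R (X * X) :=
  Prob (wmeas_prob (prodw_ge0 mu nu) (prodw1 mu nu)).

Lemma prodP_rect mu nu A B : prodP mu nu (A `*` B) = mu A * nu B.
Proof. by rewrite /= /wmeas prodw_rect. Qed.

Lemma prodP_pt mu nu x : prodP mu nu [set (x, x)] = mu [set x] * nu [set x].
Proof. by rewrite /= /wmeas esum_set1 ?lee_fin ?prodw_ge0. Qed.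

Lemma coupling_prod mu nu : coupling mu nu (prodP mu nu).
Proof. by split => A; rewrite prodP_rect probT ?mulr1 ?mul1r. Qed.

Definition offd : set (X * X) := [set z | z.1 != z.2].

Lemma costE (p : R) (pi : prob R (X * X)) : 0 < p -> cost p pi = pi offd.
Proof.
move=> hp; rewrite /cost powR0 ?gt_eqF // mul0r add0r powR1 mul1r.
congr (pmeas pi _); apply/seteqP; split=> -[a b] /=; rewrite /rho /=.
- case: (eqVneq a b) => [<-|ab]; rewrite ?eqxx ?(negbTE ab) //.
  by move=> /esym/eqP; rewrite oner_eq0.
- by rewrite /offd /= => /negbTE ->.
Qed.

Definition Dc p (mu nu : prob R X) :=
  inf [set cost p pi | pi in [set pi | coupling mu nu pi]].

Lemma WpE p mu nu : Wp p mu nu = if 1 <= p then Dc p mu nu `^ p^-1 else Dc p mu nu.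
Proof. by []. Qed.

Variable p : R.
Hypothesis hp : 0 < p.

Lemma Dc_lb mu nu : has_lbound [set cost p pi | pi in [set pi | coupling mu nu pi]].
Proof. by exists 0 => _ [pi _ <-]; rewrite costE // prob_ge0. Qed.

Lemma Dc_ge0 mu nu : 0 <= Dc p mu nu.
Proof.
apply: lb_le_inf; first by exists (cost p (prodP mu nu)); exists (prodP mu nu) => //; exact: coupling_prod.
by move=> _ [pi _ <-]; rewrite costE // prob_ge0.
Qed.

Lemma Dc_le mu nu pi : coupling mu nu pi -> Dc p mu nu <= cost p pi.
Proof. by move=> c; apply: (ge_inf (Dc_lb mu nu)); exists pi. Qed.

Lemma Dc_const mu nu c :
  (forall pi, coupling mu nu pi -> pi offd = c) -> Dc p mu nu = c.
Proof.
move=> h; rewrite /Dc.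
have -> : [set cost p pi | pi in [set pi | coupling mu nu pi]] = [set c].
  apply/seteqP; split=> x /=.
  - by move=> [pi cp <-]; rewrite costE // h.
  - by move=> ->; exists (prodP mu nu); [exact: coupling_prod|rewrite costE // h //; exact: coupling_prod].
exact: inf1.
Qed.

Lemma Dc_dirac_r m y : Dc p m (dirac y) = 1 - m [set y].
Proof.
apply: Dc_const => pi [c1 c2].
pose N : set (X * X) := setT `*` ~` [set y].
have PN : pi N = 0.
  by rewrite /N c2 diracE; case: ifPn => // /asboolP /=.
rewrite (prob_null offd PN).
have -> : offd `&` ~` N = (~` [set y] `*` setT) `&` ~` N.
  apply/seteqP; split=> -[a b] /= [h1 h2]; have hb : b = y.
    - by apply: contrapT => hb; apply: h2.
    - by split=> //; move: h1; rewrite hb => /eqP.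
    - by apply: contrapT => hb; apply: h2.
    - by split=> //; rewrite hb; apply/eqP; case: h1.
by rewrite -(prob_null _ PN) c1 probC.
Qed.

Lemma Dc_dirac_l x n : Dc p (dirac x) n = 1 - n [set x].
Proof.
apply: Dc_const => pi [c1 c2].
pose N : set (X * X) := ~` [set x] `*` setT.
have PN : pi N = 0.
  by rewrite /N c1 diracE; case: ifPn => // /asboolP /=.
rewrite (prob_null offd PN).
have -> : offd `&` ~` N = (setT `*` ~` [set x]) `&` ~` N.
  apply/seteqP; split=> -[a b] /= [h1 h2]; have ha : a = x.
    - by apply: contrapT => ha; apply: h2.
    - by split=> //; move: h1; rewrite ha => /eqP /nesym.
    - by apply: contrapT => ha; apply: h2.
    - by split=> //; rewrite ha; apply/eqP; case: h1 => _ /nesym.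
by rewrite -(prob_null _ PN) c2 probC.
Qed.

Lemma Dc_prod m n x : Dc p m n <= 1 - m [set x] * n [set x].
Proof.
apply: (le_trans (Dc_le (coupling_prod m n))); rewrite costE //.
have -> : offd = ~` [set z | z.1 = z.2].
  by apply/seteqP; split=> -[a b] /=; [move/eqP | move/eqP].
rewrite probC lerD2l lerN2 -prodP_pt; apply: prob_le => -[a b] /= [-> ->] //.
Qed.

End W.

Section Main.
Variable R : realType.
Variable X : countType.
Variable p : R.
Hypothesis hp : 0 < p.
Implicit Types (mu nu m n : prob R X).

Lemma powR_inv_inj (a b : R) : 0 <= a -> 0 <= b -> a `^ p^-1 = b `^ p^-1 -> a = b.
Proof.
move=> a0 b0 e.
have : (a `^ p^-1) `^ p = (b `^ p^-1) `^ p by rewrite e.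
by rewrite -!powRrM mulVf ?gt_eqF // !powRr1.
Qed.

Lemma iso_Dc (f : prob R X -> prob R X) : Wp_isometry p f -> forall a b, Dc p (f a) (f b) = Dc p a b.
Proof.
move=> iso a b; have := iso a b; rewrite !WpE; case: ifP => _ //.
by apply: powR_inv_inj; apply: Dc_ge0.
Qed.

Definition orth m n := Dc p m n = 1.
Definition Char m := forall m', (forall n, orth m n -> orth m' n) -> m' = m.

Lemma char_dirac x : Char (dirac R x).
Proof.
move=> m' h.
have hy : forall y, y != x -> m' [set y] = 0.
  move=> y yx.
  have o : orth (dirac R x) (dirac R y).
    rewrite /orth Dc_dirac_r // diracE asboolF ?subr0 //= => exy.
    by move: yx; rewrite exy eqxx.
  have := h _ o; rewrite /orth Dc_dirac_r // => /eqP.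
  by rewrite subr_eq addrC -subr_eq subrr => /eqP <-.
have h1 := prob_only hy.
by apply: prob_ext => A; rewrite (prob_mass1 h1) diracE.
Qed.

Lemma char_is_dirac m : Char m -> exists x, m = dirac R x.
Proof.
move=> cm; have [x hx] := prob_pos m; exists x; apply/esym/cm => n.
rewrite /orth => o.
have := Dc_prod hp m n x; rewrite o => h.
have hn : n [set x] = 0.
  apply/eqP; rewrite eq_le prob_ge0 andbT -(pmulr_rle0 _ hx).
  by move: h; rewrite lerBrDr gerDl.
by rewrite Dc_dirac_l // hn subr0.
Qed.

Lemma char_transport (f g : prob R X -> prob R X) :
  cancel f g -> cancel g f -> Wp_isometry p f -> forall m, Char m -> Char (f m).
Proof.
move=> fK gK iso m cm m'' h.
suff e : g m'' = m by rewrite -e gK.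
apply: cm => n o.
have o1 : orth (f m) (f n) by rewrite /orth iso_Dc.
have := h _ o1; rewrite /orth -{1}(gK m'') iso_Dc //.
Qed.

Lemma part1 (f : prob R X -> prob R X) : bijective f -> Wp_isometry p f ->
  exists sigma sigmainv : X -> X,
    [/\ cancel sigma sigmainv, cancel sigmainv sigma &
        forall mu x, f mu [set x] = mu [set sigmainv x]].
Proof.
case=> g fK gK iso.
have isog : Wp_isometry p g.
  by move=> a b; rewrite -[in RHS](gK a) -[in RHS](gK b) iso.
have fd : forall x, exists y, f (dirac R x) = dirac R y.
  by move=> x; apply: char_is_dirac; apply: (char_transport fK gK iso); apply: char_dirac.
have gd : forall x, exists y, g (dirac R x) = dirac R y.
  by move=> x; apply: char_is_dirac; apply: (char_transport gK fK isog); apply: char_dirac.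
pose sigma x := projT1 (cid (fd x)).
pose sigmainv y := projT1 (cid (gd y)).
have hs x : f (dirac R x) = dirac R (sigma x) := projT2 (cid (fd x)).
have hsi y : g (dirac R y) = dirac R (sigmainv y) := projT2 (cid (gd y)).
exists sigma, sigmainv; split.
- by move=> x; apply: (@dirac_inj R X); rewrite -hsi -hs fK.
- by move=> y; apply: (@dirac_inj R X); rewrite -hs -hsi gK.
- move=> mu x.
  have e : f (dirac R (sigmainv x)) = dirac R x by rewrite -hsi gK.
  have := iso_Dc iso mu (dirac R (sigmainv x)).
  by rewrite e !Dc_dirac_r // => /addrI/oppr_inj.
Qed.

End Main.

Section Part2.
Variable R : realType.
Variable X : countType.
Implicit Types (mu nu m n : prob R X).

Definition push (h : X -> X) mu : prob R X := Prob (push_prob mu h).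
Definition push2 (h : X -> X) (pi : prob R (X * X)) : prob R (X * X) :=
  Prob (push_prob pi (fun z => (h z.1, h z.2))).

Lemma cost_push p h pi : injective h -> cost p (push2 h pi) = cost p pi.
Proof.
move=> hinj; rewrite /cost /=.
have e : forall c, (fun z : X * X => (h z.1, h z.2)) @^-1` [set z | rho R z.1 z.2 = c]
                   = [set z | rho R z.1 z.2 = c].
  by move=> c; apply/seteqP; split=> z; rewrite /= /rho (inj_eq hinj).
by rewrite !e.
Qed.

Lemma coupling_push h mu nu pi : coupling mu nu pi ->
  coupling (push h mu) (push h nu) (push2 h pi).
Proof. by case=> c1 c2; split=> A /=; [exact: c1 | exact: c2]. Qed.

Lemma part2 (p : R) sigma sigmainv : cancel sigma sigmainv -> cancel sigmainv sigma ->
  (exists g : prob R X -> prob R X, forall mu x, g mu [set x] = mu [set sigmainv x]) /\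
  (forall g : prob R X -> prob R X,
     (forall mu x, g mu [set x] = mu [set sigmainv x]) -> Wp_isometry p g).
Proof.
move=> sK siK.
have pushpt : forall mu x, push sigma mu [set x] = mu [set sigmainv x].
  move=> mu x /=; congr (pmeas mu _); apply/seteqP; split=> t /=.
  - by move=> <-; rewrite sK.
  - by move=> ->; rewrite siK.
split; first by exists (push sigma).
move=> g hg.
have eg : forall mu, g mu = push sigma mu.
  by move=> mu; apply: prob_pt_ext => x; rewrite hg pushpt.
have pp : forall mu, push sigmainv (push sigma mu) = mu.
  move=> mu; apply: prob_ext => A /=; congr (pmeas mu _).
  by apply/seteqP; split=> t /=; rewrite sK.
move=> mu nu; rewrite !eg.
have S : [set cost p pi | pi in [set pi | coupling (push sigma mu) (push sigma nu) pi]] =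
         [set cost p pi | pi in [set pi | coupling mu nu pi]].
  apply/seteqP; split=> _ [pi cp <-].
  - exists (push2 sigmainv pi); last by rewrite cost_push //; exact: can_inj siK.
    by rewrite /= -(pp mu) -(pp nu); exact: coupling_push.
  - exists (push2 sigma pi); last by rewrite cost_push //; exact: can_inj sK.
    exact: coupling_push.
by rewrite /Wp S.
Qed.

End Part2.

Unset Implicit Arguments.

Theorem corollary2p2 (R : realType) (X : countType) (p : R) :
  (exists x y : X, x != y) -> 0 < p ->
  (forall f : prob R X -> prob R X,
     bijective f -> Wp_isometry p f ->
     exists sigma sigmainv : X -> X,
       [/\ cancel sigma sigmainv, cancel sigmainv sigma &
           forall (mu : prob R X) (x : X), f mu [set x] = mu [set sigmainv x]])
  /\
  (forall sigma sigmainv : X -> X,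
     cancel sigma sigmainv -> cancel sigmainv sigma ->
     (exists g : prob R X -> prob R X,
        forall (mu : prob R X) (x : X), g mu [set x] = mu [set sigmainv x])
     /\
     (forall g : prob R X -> prob R X,
        (forall (mu : prob R X) (x : X), g mu [set x] = mu [set sigmainv x]) ->
        Wp_isometry p g)).
Proof.
move=> _ hp; split.
- by move=> f; apply: part1.
- by move=> sigma sigmainv; apply: part2.
Qed.
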